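(* Let $G$ be a nontrivial finite subgroup of $\mathrm{SO}(3)$. Then there does not exist a continuous function $f:\mathrm{SO}(3)/G\to\mathrm{SO}(3)$ such that $p_G(f(\mathcal{R}))=\mathcal{R}$ for every $\mathcal{R}\in\mathrm{SO}(3)/G$.
   Context: $\mathrm{SO}(3)/G$ denotes the space of left cosets $RG$ ($R\in\mathrm{SO}(3)$) with the quotient topology, and $p_G:\mathrm{SO}(3)\to\mathrm{SO}(3)/G$, $R\mapsto RG$, is the quotient (covering) map. *)

(* Defs.v *)
From HB Require Import structures.
From mathcomp Require Import all_boot all_order all_algebra.
From mathcomp Require Import all_classical all_reals all_analysis.
Set Implicit Arguments. Unset Strict Implicit. Unset Printing Implicit Defensive.
Import Order.TTheory GRing.Theory Num.Theory.
Import numFieldNormedType.Exports.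
Local Open Scope classical_set_scope.
Local Open Scope ring_scope.

(* SO(3) is a subspace of 'M[R]_3 (with its
   canonical matrix topology); the quotient SO(3)/G is the set of left
   cosets R G, topologized by the quotient topology, written out explicitly. *)

Definition SO3 (R : realType) : set 'M[R]_3 :=
  [set M | M *m M^T = 1%:M /\ \det M = 1].

Definition rel_open (R : realType) (A X : set 'M[R]_3) : Prop :=
  exists U : set 'M[R]_3, open U /\ X = U `&` A.

Definition finite_subgroup_SO3 (R : realType) (G : set 'M[R]_3) : Prop :=
  [/\ finite_set G, G `<=` @SO3 R, G 1%:M,
      (forall g h, G g -> G h -> G (g *m h)) &
      (forall g, G g -> G (invmx g))].

Definition lcoset (R : realType) (G : set 'M[R]_3) (M : 'M[R]_3) : set 'M[R]_3 :=
  [set M *m g | g in G].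

Definition quot (R : realType) (G : set 'M[R]_3) : set (set 'M[R]_3) :=
  [set C | exists2 M, @SO3 R M & C = lcoset G M].

Definition quot_open (R : realType) (G : set 'M[R]_3) (W : set (set 'M[R]_3)) : Prop :=
  W `<=` quot G /\ rel_open (@SO3 R) [set M | @SO3 R M /\ W (lcoset G M)].

Definition quot_continuous (R : realType) (G : set 'M[R]_3)
  (f : set 'M[R]_3 -> 'M[R]_3) : Prop :=
  forall V, rel_open (@SO3 R) V -> quot_open G [set C | quot G C /\ V (f C)].

(* Main.v *)
Require Import Defs.
From HB Require Import structures.
From mathcomp Require Import all_boot all_order all_algebra.
From mathcomp Require Import all_classical all_reals all_analysis.
From mathcomp Require Import ring lra.
Import Order.TTheory GRing.Theory Num.Theory.
Import numFieldNormedType.Exports.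
Local Open Scope classical_set_scope.
Local Open Scope ring_scope.

Set Implicit Arguments. Unset Strict Implicit. Unset Printing Implicit Defensive.
Section S.
Variable R : realType.
Definition i0 : 'I_3 := @Ordinal 3 0 isT.
Definition i1 : 'I_3 := @Ordinal 3 1 isT.
Definition i2 : 'I_3 := @Ordinal 3 2 isT.

Definition mx3 (a b c d e f g h k : R) : 'M[R]_3 :=
  \matrix_(i, j) match nat_of_ord i, nat_of_ord j with
    | 0, 0 => a | 0, 1 => b | 0, _ => c
    | 1, 0 => d | 1, 1 => e | 1, _ => f
    | _, 0 => g | _, 1 => h | _, _ => k end.

Lemma ord3_cases (i : 'I_3) : [\/ i = i0, i = i1 | i = i2].
Proof.
case: i => [[|[|[|i]]] Hi].
- by constructor 1; apply: val_inj.
- by constructor 2; apply: val_inj.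
- by constructor 3; apply: val_inj.
- by [].
Qed.

Lemma mx3_eta (N : 'M[R]_3) :
  N = mx3 (N i0 i0) (N i0 i1) (N i0 i2) (N i1 i0) (N i1 i1) (N i1 i2)
          (N i2 i0) (N i2 i1) (N i2 i2).
Proof.
apply/matrixP => i j; rewrite mxE.
by case: (ord3_cases i) => ->; case: (ord3_cases j) => ->.
Qed.

Lemma sum3 (F : 'I_3 -> R) : \sum_i F i = F i0 + F i1 + F i2.
Proof.
rewrite !big_ord_recr big_ord0 /= add0r.
by congr (_ + _ + _); congr F; apply: val_inj.
Qed.

Lemma mx3E00 a b c d e f g h k : (mx3 a b c d e f g h k) i0 i0 = a.
Proof. by rewrite mxE. Qed.
Lemma mx3E01 a b c d e f g h k : (mx3 a b c d e f g h k) i0 i1 = b.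
Proof. by rewrite mxE. Qed.
Lemma mx3E02 a b c d e f g h k : (mx3 a b c d e f g h k) i0 i2 = c.
Proof. by rewrite mxE. Qed.
Lemma mx3E10 a b c d e f g h k : (mx3 a b c d e f g h k) i1 i0 = d.
Proof. by rewrite mxE. Qed.
Lemma mx3E11 a b c d e f g h k : (mx3 a b c d e f g h k) i1 i1 = e.
Proof. by rewrite mxE. Qed.
Lemma mx3E12 a b c d e f g h k : (mx3 a b c d e f g h k) i1 i2 = f.
Proof. by rewrite mxE. Qed.
Lemma mx3E20 a b c d e f g h k : (mx3 a b c d e f g h k) i2 i0 = g.
Proof. by rewrite mxE. Qed.
Lemma mx3E21 a b c d e f g h k : (mx3 a b c d e f g h k) i2 i1 = h.
Proof. by rewrite mxE. Qed.
Lemma mx3E22 a b c d e f g h k : (mx3 a b c d e f g h k) i2 i2 = k.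
Proof. by rewrite mxE. Qed.

Definition mx3E := (mx3E00, mx3E01, mx3E02, mx3E10, mx3E11, mx3E12, mx3E20, mx3E21, mx3E22).

Lemma mx3_mul a b c d e f g h k a' b' c' d' e' f' g' h' k' :
  mx3 a b c d e f g h k *m mx3 a' b' c' d' e' f' g' h' k' =
  mx3 (a*a' + b*d' + c*g') (a*b' + b*e' + c*h') (a*c' + b*f' + c*k')
      (d*a' + e*d' + f*g') (d*b' + e*e' + f*h') (d*c' + e*f' + f*k')
      (g*a' + h*d' + k*g') (g*b' + h*e' + k*h') (g*c' + h*f' + k*k').
Proof.
apply/matrixP => i j; rewrite !mxE sum3 !mxE.
by case: (ord3_cases i) => ->; case: (ord3_cases j) => ->.
Qed.

Lemma mx3_tr a b c d e f g h k :
  (mx3 a b c d e f g h k)^T = mx3 a d g b e h c f k.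
Proof.
apply/matrixP => i j; rewrite !mxE.
by case: (ord3_cases i) => ->; case: (ord3_cases j) => ->.
Qed.

Lemma mx3_one : (1%:M : 'M[R]_3) = mx3 1 0 0 0 1 0 0 0 1.
Proof.
apply/matrixP => i j; rewrite !mxE.
by case: (ord3_cases i) => ->; case: (ord3_cases j) => ->.
Qed.

Lemma mx3_trace a b c d e f g h k : \tr (mx3 a b c d e f g h k) = a + e + k.
Proof. by rewrite /mxtrace sum3 !mxE. Qed.

Lemma sum2 (F : 'I_2 -> R) : \sum_i F i = F ord0 + F ord_max.
Proof. by rewrite !big_ord_recr big_ord0 /= add0r; congr (F _ + F _); apply: val_inj. Qed.

Lemma mx3_det a b c d e f g h k :
  \det (mx3 a b c d e f g h k) =
  a*e*k + b*f*g + c*d*h - a*f*h - b*d*k - c*e*g.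
Proof.
rewrite (expand_det_row _ i0) sum3 /cofactor !mxE /=.
rewrite !(expand_det_row _ ord0) !sum2 /cofactor !det_mx11 !mxE /=.
ring.
Qed.
Lemma cert00 (x00 x01 x02 x10 x11 x12 x20 x21 x22 r0 r1 r2 r3 r4 r5 r6 r7 r8 r9 r10 r11 r12 : R) :
  r0 = (x00*x00 + x01*x01 + x02*x02 - 1) -> r1 = (x00*x00 + x10*x10 + x20*x20 - 1) -> r2 = (x00*x10 + x01*x11 + x02*x12) -> r3 = (x00*x01 + x10*x11 + x20*x21) -> r4 = (x00*x20 + x01*x21 + x02*x22) -> r5 = (x00*x02 + x10*x12 + x20*x22) -> r6 = (x10*x10 + x11*x11 + x12*x12 - 1) -> r7 = (x01*x01 + x11*x11 + x21*x21 - 1) -> r8 = (x10*x20 + x11*x21 + x12*x22) -> r9 = (x01*x02 + x11*x12 + x21*x22) -> r10 = (x20*x20 + x21*x21 + x22*x22 - 1) -> r11 = (x02*x02 + x12*x12 + x22*x22 - 1) -> r12 = (x00*x11*x22 + x01*x12*x20 + x02*x10*x21 - x00*x12*x21 - x01*x10*x22 - x02*x11*x20 - 1) ->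
  (((1 + x00 + x11 + x22)*(1 + x00 + x11 + x22) + ((x21 - x12)*(x21 - x12) + (x02 - x20)*(x02 - x20) + (x10 - x01)*(x10 - x01))) * (x00 - 1) - 2%:R * ((x21 - x12)*(x21 - x12) - ((x21 - x12)*(x21 - x12) + (x02 - x20)*(x02 - x20) + (x10 - x01)*(x10 - x01)))) = (1%:R - 2%:R*x12*x21 + 2%:R*x12*x21*x22 + 2%:R*x11*x22 - 2%:R*x11*x22*x22 + 2%:R*x11*x12*x21 - 2%:R*x11*x11*x22 + x00 + 2%:R*x00*x12*x21 - 2%:R*x00*x11*x22) * r0 + (2%:R + 2%:R*x22 + 2%:R*x11 - 2%:R*x01*x10) * r1 + (- 2%:R*x12*x20 + 2%:R*x10*x22 + 2%:R*x02*x21 - 2%:R*x02*x21*x22 - 2%:R*x02*x11*x21 - 2%:R*x01*x22 + 2%:R*x01*x22*x22 + 2%:R*x01*x11*x22 - 2%:R*x00*x02*x21 + 2%:R*x00*x01 + 2%:R*x00*x01*x22) * r2 + (- 2%:R*x10 - 2%:R*x01*x11) * r3 + (2%:R*x11*x20 - 2%:R*x10*x21 - 2%:R*x02*x11 + 2%:R*x02*x11*x22 + 2%:R*x02*x11*x11 + 2%:R*x01*x12 - 2%:R*x01*x12*x22 - 2%:R*x01*x11*x12 + 2%:R*x00*x02*x11 - 2%:R*x00*x01*x12) * r4 + (- 2%:R*x20 - 2%:R*x01*x12) * r5 + (- 1%:R - 2%:R*x22 + 2%:R*x02*x20 + 2%:R*x01*x10 + x00 - 2%:R*x00*x22) * r6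 + (2%:R*x21 + 2%:R*x12 - 2%:R*x02*x10 + 2%:R*x00*x21 + 2%:R*x00*x12) * r8 + (- 1%:R - 2%:R*x11 + 2%:R*x01*x10 + x00 - 2%:R*x00*x11) * r10 + (2%:R*x22 + 2%:R*x11 - 2%:R*x00 + 2%:R*x00*x22 + 2%:R*x00*x11 + 2%:R*x00*x00) * r12.
Proof. move=> h0 h1 h2 h3 h4 h5 h6 h7 h8 h9 h10 h11 h12; rewrite ?h0 ?h1 ?h2 ?h3 ?h4 ?h5 ?h6 ?h8 ?h10 ?h12; ring. Qed.

Lemma cert01 (x00 x01 x02 x10 x11 x12 x20 x21 x22 r0 r1 r2 r3 r4 r5 r6 r7 r8 r9 r10 r11 r12 : R) :
  r0 = (x00*x00 + x01*x01 + x02*x02 - 1) -> r1 = (x00*x00 + x10*x10 + x20*x20 - 1) -> r2 = (x00*x10 + x01*x11 + x02*x12) -> r3 = (x00*x01 + x10*x11 + x20*x21) -> r4 = (x00*x20 + x01*x21 + x02*x22) -> r5 = (x00*x02 + x10*x12 + x20*x22) -> r6 = (x10*x10 + x11*x11 + x12*x12 - 1) -> r7 = (x01*x01 + x11*x11 + x21*x21 - 1) -> r8 = (x10*x20 + x11*x21 + x12*x22) -> r9 = (x01*x02 + x11*x12 + x21*x22) -> r10 = (x20*x20 + x21*x21 + x22*x22 - 1) -> r11 = (x02*x02 + x12*x12 + x22*x22 - 1) -> r12 = (x00*x11*x22 + x01*x12*x20 + x02*x10*x21 - x00*x12*x21 - x01*x10*x22 - x02*x11*x20 - 1) ->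
  (((1 + x00 + x11 + x22)*(1 + x00 + x11 + x22) + ((x21 - x12)*(x21 - x12) + (x02 - x20)*(x02 - x20) + (x10 - x01)*(x10 - x01))) * x01 - 2%:R * ((x21 - x12)*(x02 - x20) + (1 + x00 + x11 + x22)*(x01 - x10))) = (2%:R*x12*x20 - 2%:R*x12*x20*x22 - 2%:R*x10*x22 + 2%:R*x10*x22*x22 + x01 - 2%:R*x00*x12*x20 + 2%:R*x00*x10*x22) * r0 + (- 2%:R*x10 + 2%:R*x02*x21 - 2%:R*x01*x22) * r1 + (2%:R + 2%:R*x22 - 2%:R*x02*x20 + 2%:R*x02*x20*x22 - 2%:R*x01*x12*x20 + 2%:R*x01*x10*x22 + 2%:R*x00 + 2%:R*x00*x22 - 2%:R*x00*x22*x22 + 2%:R*x00*x02*x20 - 2%:R*x00*x00*x22) * r2 + (2%:R - 2%:R*x02*x20 + 2%:R*x00*x22) * r3 + (- 2%:R*x12 + 2%:R*x02*x10 - 2%:R*x02*x10*x22 - 2%:R*x00*x12 + 2%:R*x00*x12*x22 - 2%:R*x00*x02*x10 + 2%:R*x00*x00*x12) * r4 + (- 2%:R*x12 + 2%:R*x01*x20 - 2%:R*x00*x21) * r5 + (2%:R*x10 + x01 + 2%:R*x01*x02*x20 - 2%:R*x00*x01*x22) * r6 + (- 2%:R*x10) * r7 + (- 2%:R*x01*x02*x10 + 2%:R*x00*x01*x12) * r8 + (2%:R*x10 + x01) * r10 + (- 2%:R*x10 - 2%:R*x01 + 2%:R*x01*x22 + 2%:R*x01*x11 + 2%:R*x00*x01)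 * r12.
Proof. move=> h0 h1 h2 h3 h4 h5 h6 h7 h8 h9 h10 h11 h12; rewrite ?h0 ?h1 ?h2 ?h3 ?h4 ?h5 ?h6 ?h7 ?h8 ?h10 ?h12; ring. Qed.

Lemma cert02 (x00 x01 x02 x10 x11 x12 x20 x21 x22 r0 r1 r2 r3 r4 r5 r6 r7 r8 r9 r10 r11 r12 : R) :
  r0 = (x00*x00 + x01*x01 + x02*x02 - 1) -> r1 = (x00*x00 + x10*x10 + x20*x20 - 1) -> r2 = (x00*x10 + x01*x11 + x02*x12) -> r3 = (x00*x01 + x10*x11 + x20*x21) -> r4 = (x00*x20 + x01*x21 + x02*x22) -> r5 = (x00*x02 + x10*x12 + x20*x22) -> r6 = (x10*x10 + x11*x11 + x12*x12 - 1) -> r7 = (x01*x01 + x11*x11 + x21*x21 - 1) -> r8 = (x10*x20 + x11*x21 + x12*x22) -> r9 = (x01*x02 + x11*x12 + x21*x22) -> r10 = (x20*x20 + x21*x21 + x22*x22 - 1) -> r11 = (x02*x02 + x12*x12 + x22*x22 - 1) -> r12 = (x00*x11*x22 + x01*x12*x20 + x02*x10*x21 - x00*x12*x21 - x01*x10*x22 - x02*x11*x20 - 1) ->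
  (((1 + x00 + x11 + x22)*(1 + x00 + x11 + x22) + ((x21 - x12)*(x21 - x12) + (x02 - x20)*(x02 - x20) + (x10 - x01)*(x10 - x01))) * x02 - 2%:R * ((x21 - x12)*(x10 - x01) + (1 + x00 + x11 + x22)*(x02 - x20))) = (- 2%:R*x20 - 2%:R*x12*x12*x20 - 2%:R*x11*x20 + 2%:R*x11*x20*x22 + 2%:R*x10*x21 - 2%:R*x10*x21*x22 + 2%:R*x10*x12*x22 + x02 + 2%:R*x00*x11*x20 - 2%:R*x00*x10*x21) * r0 + (x02) * r1 + (- 2%:R*x21 + x12 + 2%:R*x02*x12*x20 - 2%:R*x02*x10*x22 + 2%:R*x01*x20 - 2%:R*x01*x20*x22 - 2%:R*x01*x10*x21 - 2%:R*x00*x21 + 2%:R*x00*x21*x22 - 2%:R*x00*x12*x22 - 2%:R*x00*x10*x20 - 2%:R*x00*x01*x20 + 2%:R*x00*x00*x21) * r2 + (- 2%:R*x21) * r3 + (x22 + 2%:R*x11 - 2%:R*x02*x11*x20 + 2%:R*x02*x10*x21 + 2%:R*x01*x12*x20 - 2%:R*x01*x10 + 2%:R*x01*x10*x11 + 2%:R*x00 - 2%:R*x00*x12*x21 + 2%:R*x00*x12*x12 + 2%:R*x00*x11 + 2%:R*x00*x10*x10 + 2%:R*x00*x01*x10 - 2%:R*x00*x00*x11) * r4 + (2%:R + 2%:R*x11 - x00) * r5 + (- 2%:R*x20) * r6 + (2%:R*x20 + x02) * r7 + (2%:R*x10) * r8 + (- 2%:R*x10 - x01) * r9 + (- 2%:R*x02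 - 2%:R*x01*x21 + 2%:R*x01*x12 - 2%:R*x00*x20 + 2%:R*x00*x02) * r12.
Proof. move=> h0 h1 h2 h3 h4 h5 h6 h7 h8 h9 h10 h11 h12; rewrite ?h0 ?h1 ?h2 ?h3 ?h4 ?h5 ?h6 ?h7 ?h8 ?h9 ?h12; ring. Qed.

Lemma cert10 (x00 x01 x02 x10 x11 x12 x20 x21 x22 r0 r1 r2 r3 r4 r5 r6 r7 r8 r9 r10 r11 r12 : R) :
  r0 = (x00*x00 + x01*x01 + x02*x02 - 1) -> r1 = (x00*x00 + x10*x10 + x20*x20 - 1) -> r2 = (x00*x10 + x01*x11 + x02*x12) -> r3 = (x00*x01 + x10*x11 + x20*x21) -> r4 = (x00*x20 + x01*x21 + x02*x22) -> r5 = (x00*x02 + x10*x12 + x20*x22) -> r6 = (x10*x10 + x11*x11 + x12*x12 - 1) -> r7 = (x01*x01 + x11*x11 + x21*x21 - 1) -> r8 = (x10*x20 + x11*x21 + x12*x22) -> r9 = (x01*x02 + x11*x12 + x21*x22) -> r10 = (x20*x20 + x21*x21 + x22*x22 - 1) -> r11 = (x02*x02 + x12*x12 + x22*x22 - 1) -> r12 = (x00*x11*x22 + x01*x12*x20 + x02*x10*x21 - x00*x12*x21 - x01*x10*x22 - x02*x11*x20 - 1) ->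
  (((1 + x00 + x11 + x22)*(1 + x00 + x11 + x22) + ((x21 - x12)*(x21 - x12) + (x02 - x20)*(x02 - x20) + (x10 - x01)*(x10 - x01))) * x10 - 2%:R * ((x02 - x20)*(x21 - x12) + (1 + x00 + x11 + x22)*(x10 - x01))) = (2%:R*x12*x20 + x10 - 2%:R*x10*x22 + 2%:R*x10*x12*x21 - 2%:R*x10*x11*x22 + 2%:R*x00*x12*x20) * r0 + (2%:R*x02*x21 - 2%:R*x02*x21*x22 - 2%:R*x02*x11*x21 - 2%:R*x01 - 2%:R*x01*x22 + 2%:R*x01*x22*x22 + 2%:R*x01*x12*x21 - 2%:R*x00*x10*x22) * r1 + (2%:R + 2%:R*x10*x10*x22 - 2%:R*x02*x20 - 2%:R*x02*x10*x21 + 2%:R*x01*x10*x22 + 2%:R*x00*x22 - 2%:R*x00*x02*x20 + 2%:R*x00*x00*x22) * r2 + (2%:R - 2%:R*x02*x20 + 2%:R*x02*x20*x22 + 2%:R*x02*x11*x20 - 2%:R*x01*x12*x20 + 2%:R*x00 + 2%:R*x00*x22 - 2%:R*x00*x22*x22 - 2%:R*x00*x11*x22) * r3 + (- 2%:R*x21 + 2%:R*x12 - 2%:R*x10*x10*x12 + 2%:R*x02*x10 + 2%:R*x02*x10*x11 - 2%:R*x01*x10*x12 - 2%:R*x00*x12 - 2%:R*x00*x00*x12) * r4 + (2%:R*x01*x20 - 2%:R*x01*x20*x22 - 2%:R*x00*x21 + 2%:R*x00*x21*x22 + 2%:R*x00*x11*x21 + 2%:R*x00*x10*x20) * r5 +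 (x10) * r6 + (- 2%:R*x02) * r8 + (x10 + 2%:R*x01) * r10 + (- 2%:R*x10 + 2%:R*x10*x22 + 2%:R*x10*x11 - 2%:R*x01 + 2%:R*x00*x10) * r12.
Proof. move=> h0 h1 h2 h3 h4 h5 h6 h7 h8 h9 h10 h11 h12; rewrite ?h0 ?h1 ?h2 ?h3 ?h4 ?h5 ?h6 ?h8 ?h10 ?h12; ring. Qed.

Lemma cert11 (x00 x01 x02 x10 x11 x12 x20 x21 x22 r0 r1 r2 r3 r4 r5 r6 r7 r8 r9 r10 r11 r12 : R) :
  r0 = (x00*x00 + x01*x01 + x02*x02 - 1) -> r1 = (x00*x00 + x10*x10 + x20*x20 - 1) -> r2 = (x00*x10 + x01*x11 + x02*x12) -> r3 = (x00*x01 + x10*x11 + x20*x21) -> r4 = (x00*x20 + x01*x21 + x02*x22) -> r5 = (x00*x02 + x10*x12 + x20*x22) -> r6 = (x10*x10 + x11*x11 + x12*x12 - 1) -> r7 = (x01*x01 + x11*x11 + x21*x21 - 1) -> r8 = (x10*x20 + x11*x21 + x12*x22) -> r9 = (x01*x02 + x11*x12 + x21*x22) -> r10 = (x20*x20 + x21*x21 + x22*x22 - 1) -> r11 = (x02*x02 + x12*x12 + x22*x22 - 1) -> r12 = (x00*x11*x22 + x01*x12*x20 + x02*x10*x21 - x00*x12*x21 - x01*x10*x22 - x02*x11*x20 - 1) ->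
  (((1 + x00 + x11 + x22)*(1 + x00 + x11 + x22) + ((x21 - x12)*(x21 - x12) + (x02 - x20)*(x02 - x20) + (x10 - x01)*(x10 - x01))) * (x11 - 1) - 2%:R * ((x02 - x20)*(x02 - x20) - ((x21 - x12)*(x21 - x12) + (x02 - x20)*(x02 - x20) + (x10 - x01)*(x10 - x01)))) = (- 1%:R + 2%:R*x12*x21 + x11 - 2%:R*x11*x22 + 2%:R*x11*x12*x21 - 2%:R*x11*x11*x22 + 2%:R*x00*x12*x21) * r0 + (2%:R*x02*x10*x21 - 2%:R*x01*x10 + 2%:R*x00 - 2%:R*x00*x12*x21 - 2%:R*x00*x12*x12 - 2%:R*x00*x11*x11) * r1 + (2%:R*x12*x20 - 2%:R*x12*x20*x22 - 2%:R*x11*x12*x20 - 2%:R*x10*x22 + 2%:R*x10*x22*x22 + 2%:R*x10*x12*x21 + 2%:R*x10*x11*x22 - 2%:R*x02*x21 - 2%:R*x02*x11*x21 + 2%:R*x01*x22 + 2%:R*x01*x11*x22 - 2%:R*x00*x02*x21 + 2%:R*x00*x01 - 2%:R*x00*x00*x10) * r2 + (- 2%:R*x02*x10*x20 - 2%:R*x01*x12*x12 - 2%:R*x01*x11 - 2%:R*x01*x11*x11 - 2%:R*x01*x10*x10 + 2%:R*x00*x12*x20 + 2%:R*x00*x10*x11) * r3 + (2%:R*x12*x12*x20 + 2%:R*x11*x20 + 2%:R*x11*x11*x20 - 2%:R*x10*x21 - 2%:R*x10*x12*x22 - 2%:R*x10*x11*x21 - 2%:R*x10*x11*x12 + 2%:R*x02*x11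 + 2%:R*x02*x11*x11 - 2%:R*x01*x12 - 2%:R*x01*x11*x12 - 2%:R*x00*x01*x12) * r4 + (- 2%:R*x01*x12 + 2%:R*x00*x10*x12) * r5 + (1%:R + x11 - 2%:R*x02*x20 + 2%:R*x02*x11*x20 - 2%:R*x02*x10*x21 + 2%:R*x01*x10 + 2%:R*x01*x10*x11 - 2%:R*x00 + 2%:R*x00*x22 - 2%:R*x00*x22*x22 - 2%:R*x00*x11*x22 + 2%:R*x00*x01*x01 + 2%:R*x00*x00*x00) * r6 + (2%:R + 2%:R*x00) * r7 + (2%:R*x02*x10 + 2%:R*x01*x10*x21 + 2%:R*x00*x21 - 2%:R*x00*x12 + 2%:R*x00*x12*x22 + 2%:R*x00*x11*x12 + 2%:R*x00*x01*x02) * r8 + (- 1%:R + x11 + 2%:R*x01*x10 - 2%:R*x00 - 2%:R*x00*x11) * r10 + (2%:R*x22 - 2%:R*x11 + 2%:R*x11*x22 + 2%:R*x11*x11 + 2%:R*x00 + 2%:R*x00*x11) * r12.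
Proof. move=> h0 h1 h2 h3 h4 h5 h6 h7 h8 h9 h10 h11 h12; rewrite ?h0 ?h1 ?h2 ?h3 ?h4 ?h5 ?h6 ?h7 ?h8 ?h10 ?h12; ring. Qed.

Lemma cert12 (x00 x01 x02 x10 x11 x12 x20 x21 x22 r0 r1 r2 r3 r4 r5 r6 r7 r8 r9 r10 r11 r12 : R) :
  r0 = (x00*x00 + x01*x01 + x02*x02 - 1) -> r1 = (x00*x00 + x10*x10 + x20*x20 - 1) -> r2 = (x00*x10 + x01*x11 + x02*x12) -> r3 = (x00*x01 + x10*x11 + x20*x21) -> r4 = (x00*x20 + x01*x21 + x02*x22) -> r5 = (x00*x02 + x10*x12 + x20*x22) -> r6 = (x10*x10 + x11*x11 + x12*x12 - 1) -> r7 = (x01*x01 + x11*x11 + x21*x21 - 1) -> r8 = (x10*x20 + x11*x21 + x12*x22) -> r9 = (x01*x02 + x11*x12 + x21*x22) -> r10 = (x20*x20 + x21*x21 + x22*x22 - 1) -> r11 = (x02*x02 + x12*x12 + x22*x22 - 1) -> r12 = (x00*x11*x22 + x01*x12*x20 + x02*x10*x21 - x00*x12*x21 - x01*x10*x22 - x02*x11*x20 - 1) ->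
  (((1 + x00 + x11 + x22)*(1 + x00 + x11 + x22) + ((x21 - x12)*(x21 - x12) + (x02 - x20)*(x02 - x20) + (x10 - x01)*(x10 - x01))) * x12 - 2%:R * ((x02 - x20)*(x10 - x01) + (1 + x00 + x11 + x22)*(x12 - x21))) = (2%:R*x12*x12*x21 - 2%:R*x11*x12*x22 + 2%:R*x01*x10*x12) * r0 + (x12 - 2%:R*x02*x10*x11 - 2%:R*x01*x10*x21 + 2%:R*x01*x10*x12 - 2%:R*x00*x12*x22 - 2%:R*x00*x11*x21) * r1 + (- 2%:R*x20 - 2%:R*x11*x20 + 2%:R*x11*x11*x20 + 2%:R*x10*x21 - 2%:R*x10*x21*x22 + 2%:R*x10*x12*x22 - 2%:R*x10*x11*x21 + x02 - 2%:R*x02*x12*x21 + 2%:R*x02*x11*x22 + 2%:R*x01*x12*x22 + 2%:R*x01*x11*x21 - 2%:R*x01*x02*x10 + 2%:R*x00*x11*x20 - 2%:R*x00*x01*x12 - 2%:R*x00*x00*x20) * r2 + (- 2%:R*x02*x11 - 2%:R*x02*x11*x11 + 2%:R*x02*x10*x10 + 2%:R*x01*x12 + 2%:R*x01*x11*x12 + 2%:R*x01*x10*x20 + 2%:R*x00*x11*x20 + 2%:R*x00*x10*x21 - 2%:R*x00*x10*x12) * r3 + (2%:R*x10*x12*x21 - 2%:R*x10*x12*x12 - 2%:R*x01*x12*x12 - 2%:R*x01*x11*x11 - 2%:R*x00*x10*x11) * r4 + (- x10 - 2%:R*x01*x10*x10 + 2%:R*x00*x12*x20 + 2%:R*x00*x10*x11)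 * r5 + (x12 + 2%:R*x01*x20 - 2%:R*x01*x11*x20 + 2%:R*x01*x10*x21 - 2%:R*x00*x21 + 2%:R*x00*x21*x22 + 2%:R*x00*x11*x21 + 2%:R*x00*x01*x02) * r6 + (x12 + 2%:R*x02*x10 + 2%:R*x02*x10*x11 - 2%:R*x01*x10*x12 - 2%:R*x00*x12 - 2%:R*x00*x10*x20) * r7 + (x22 - 2%:R*x01*x10 - 2%:R*x00*x12*x21 + 2%:R*x00*x11 - 2%:R*x00*x11*x11 + 2%:R*x00*x00*x00) * r8 + (2%:R - x11 - 2%:R*x01*x10 + 2%:R*x00 + 2%:R*x00*x11) * r9 + (- 2%:R*x21 - 2%:R*x12 - 2%:R*x11*x21 + 2%:R*x11*x12 - 2%:R*x10*x20 + 2%:R*x00*x12) * r12.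
Proof. move=> h0 h1 h2 h3 h4 h5 h6 h7 h8 h9 h10 h11 h12; rewrite ?h0 ?h1 ?h2 ?h3 ?h4 ?h5 ?h6 ?h7 ?h8 ?h9 ?h12; ring. Qed.

Lemma cert20 (x00 x01 x02 x10 x11 x12 x20 x21 x22 r0 r1 r2 r3 r4 r5 r6 r7 r8 r9 r10 r11 r12 : R) :
  r0 = (x00*x00 + x01*x01 + x02*x02 - 1) -> r1 = (x00*x00 + x10*x10 + x20*x20 - 1) -> r2 = (x00*x10 + x01*x11 + x02*x12) -> r3 = (x00*x01 + x10*x11 + x20*x21) -> r4 = (x00*x20 + x01*x21 + x02*x22) -> r5 = (x00*x02 + x10*x12 + x20*x22) -> r6 = (x10*x10 + x11*x11 + x12*x12 - 1) -> r7 = (x01*x01 + x11*x11 + x21*x21 - 1) -> r8 = (x10*x20 + x11*x21 + x12*x22) -> r9 = (x01*x02 + x11*x12 + x21*x22) -> r10 = (x20*x20 + x21*x21 + x22*x22 - 1) -> r11 = (x02*x02 + x12*x12 + x22*x22 - 1) -> r12 = (x00*x11*x22 + x01*x12*x20 + x02*x10*x21 - x00*x12*x21 - x01*x10*x22 - x02*x11*x20 - 1) ->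
  (((1 + x00 + x11 + x22)*(1 + x00 + x11 + x22) + ((x21 - x12)*(x21 - x12) + (x02 - x20)*(x02 - x20) + (x10 - x01)*(x10 - x01))) * x20 - 2%:R * ((x10 - x01)*(x21 - x12) + (1 + x00 + x11 + x22)*(x20 - x02))) = (x20 + 2%:R*x12*x20*x21 - 2%:R*x11*x20*x22 + 2%:R*x00*x20*x22 - 2%:R*x00*x11*x20 + 2%:R*x00*x10*x21) * r0 + (x20 - 2%:R*x02 - 2%:R*x02*x21*x21 - 2%:R*x02*x11 + 2%:R*x01*x21*x22 + 2%:R*x01*x12 - 2%:R*x01*x12*x22 - 2%:R*x01*x11*x21 - 2%:R*x00*x10*x21 + 2%:R*x00*x10*x12 + 2%:R*x00*x00*x02) * r1 + (- 2%:R*x12 + 2%:R*x10*x20*x22 - 2%:R*x10*x11*x20 + 2%:R*x10*x10*x21 - 2%:R*x02*x20*x21 + 2%:R*x01*x20*x22) * r2 + (x21 + 2%:R*x02*x20*x21 + 2%:R*x02*x10 - 2%:R*x01*x20*x22 + 2%:R*x01*x11*x20 - 2%:R*x00*x21*x22 - 2%:R*x00*x12 + 2%:R*x00*x12*x22 + 2%:R*x00*x10*x20) * r3 + (2%:R - 2%:R*x10*x12*x20 + 2%:R*x02*x11*x20 - 2%:R*x01*x12*x20 - x00 - 2%:R*x00*x02*x20 - 2%:R*x00*x01*x10 + 2%:R*x00*x00*x11) * r4 + (x22 + 2%:R*x01*x12*x20 - 2%:R*x01*x10 + 4%:R*x00 + 2%:R*x00*x21*x21 - 2%:R*x00*x12*x21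 + 2%:R*x00*x11 - 2%:R*x00*x10*x10 - 2%:R*x00*x00*x00) * r5 + (x20 + 2%:R*x02) * r6 + (- 2%:R*x02) * r7 + (- x10 - 2%:R*x01) * r8 + (2%:R*x01) * r9 + (- 2%:R*x20 + 2%:R*x10*x21 - 2%:R*x10*x12 + 2%:R*x00*x20 - 2%:R*x00*x02) * r12.
Proof. move=> h0 h1 h2 h3 h4 h5 h6 h7 h8 h9 h10 h11 h12; rewrite ?h0 ?h1 ?h2 ?h3 ?h4 ?h5 ?h6 ?h7 ?h8 ?h9 ?h12; ring. Qed.

Lemma cert21 (x00 x01 x02 x10 x11 x12 x20 x21 x22 r0 r1 r2 r3 r4 r5 r6 r7 r8 r9 r10 r11 r12 : R) :
  r0 = (x00*x00 + x01*x01 + x02*x02 - 1) -> r1 = (x00*x00 + x10*x10 + x20*x20 - 1) -> r2 = (x00*x10 + x01*x11 + x02*x12) -> r3 = (x00*x01 + x10*x11 + x20*x21) -> r4 = (x00*x20 + x01*x21 + x02*x22) -> r5 = (x00*x02 + x10*x12 + x20*x22) -> r6 = (x10*x10 + x11*x11 + x12*x12 - 1) -> r7 = (x01*x01 + x11*x11 + x21*x21 - 1) -> r8 = (x10*x20 + x11*x21 + x12*x22) -> r9 = (x01*x02 + x11*x12 + x21*x22) -> r10 = (x20*x20 + x21*x21 + x22*x22 - 1) -> r11 = (x02*x02 + x12*x12 + x22*x22 - 1) -> r12 = (x00*x11*x22 + x01*x12*x20 + x02*x10*x21 - x00*x12*x21 - x01*x10*x22 - x02*x11*x20 - 1) ->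
  (((1 + x00 + x11 + x22)*(1 + x00 + x11 + x22) + ((x21 - x12)*(x21 - x12) + (x02 - x20)*(x02 - x20) + (x10 - x01)*(x10 - x01))) * x21 - 2%:R * ((x10 - x01)*(x02 - x20) + (1 + x00 + x11 + x22)*(x21 - x12))) = (x21 + 2%:R*x12*x21*x21 - 2%:R*x11*x21*x22 - 2%:R*x01*x11*x20 + 2%:R*x01*x10*x21 - 2%:R*x01*x10*x12) * r0 + (2%:R*x01*x10*x21 + 2%:R*x00*x12*x22 + 2%:R*x00*x11*x21) * r1 + (- 2%:R*x11*x20 - 2%:R*x11*x11*x20 + 2%:R*x10*x21 + 2%:R*x10*x21*x22 - 2%:R*x10*x12*x22 + 2%:R*x10*x11*x21 - 2%:R*x02*x21*x21 + 2%:R*x01*x21*x22 + 2%:R*x01*x02*x10 + 2%:R*x01*x01*x20 - 2%:R*x00*x01*x21 + 2%:R*x00*x01*x12 + 2%:R*x00*x00*x20) * r2 + (x20 - 2%:R*x02 - 2%:R*x02*x11 + 2%:R*x02*x11*x11 + 2%:R*x01*x12 - 2%:R*x01*x11*x12 - 2%:R*x01*x10*x20 - 2%:R*x00*x11*x20 - 2%:R*x00*x10*x21) * r3 + (- 2%:R*x10*x12*x21 + 2%:R*x10*x12*x12 + 2%:R*x02*x11*x21 - x01 - 2%:R*x01*x12*x21 - 2%:R*x01*x01*x10 + 2%:R*x00*x01*x11) * r4 + (- 2%:R*x00*x12*x20) * r5 + (x21 + 2%:R*x01*x20 + 2%:R*x01*x11*x20 - 2%:R*x01*x10*x21 - 2%:R*x00*x21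 - 2%:R*x00*x21*x22 - 2%:R*x00*x11*x21 - 2%:R*x00*x01*x02) * r6 + (x21 + 2%:R*x02*x10 - 2%:R*x02*x10*x11 + 2%:R*x01*x10*x12 - 2%:R*x00*x12 + 2%:R*x00*x10*x20) * r7 + (2%:R - x11 - 2%:R*x01*x10 + 2%:R*x00 + 2%:R*x00*x12*x21 + 2%:R*x00*x11 + 2%:R*x00*x11*x11 - 2%:R*x00*x00*x00) * r8 + (x22 - 2%:R*x01*x10 + 2%:R*x00*x11) * r9 + (- 2%:R*x21 - 2%:R*x12 + 2%:R*x11*x21 - 2%:R*x11*x12 - 2%:R*x01*x02 + 2%:R*x00*x21) * r12.
Proof. move=> h0 h1 h2 h3 h4 h5 h6 h7 h8 h9 h10 h11 h12; rewrite ?h0 ?h1 ?h2 ?h3 ?h4 ?h5 ?h6 ?h7 ?h8 ?h9 ?h12; ring. Qed.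

Lemma cert22 (x00 x01 x02 x10 x11 x12 x20 x21 x22 r0 r1 r2 r3 r4 r5 r6 r7 r8 r9 r10 r11 r12 : R) :
  r0 = (x00*x00 + x01*x01 + x02*x02 - 1) -> r1 = (x00*x00 + x10*x10 + x20*x20 - 1) -> r2 = (x00*x10 + x01*x11 + x02*x12) -> r3 = (x00*x01 + x10*x11 + x20*x21) -> r4 = (x00*x20 + x01*x21 + x02*x22) -> r5 = (x00*x02 + x10*x12 + x20*x22) -> r6 = (x10*x10 + x11*x11 + x12*x12 - 1) -> r7 = (x01*x01 + x11*x11 + x21*x21 - 1) -> r8 = (x10*x20 + x11*x21 + x12*x22) -> r9 = (x01*x02 + x11*x12 + x21*x22) -> r10 = (x20*x20 + x21*x21 + x22*x22 - 1) -> r11 = (x02*x02 + x12*x12 + x22*x22 - 1) -> r12 = (x00*x11*x22 + x01*x12*x20 + x02*x10*x21 - x00*x12*x21 - x01*x10*x22 - x02*x11*x20 - 1) ->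
  (((1 + x00 + x11 + x22)*(1 + x00 + x11 + x22) + ((x21 - x12)*(x21 - x12) + (x02 - x20)*(x02 - x20) + (x10 - x01)*(x10 - x01))) * (x22 - 1) - 2%:R * ((x10 - x01)*(x10 - x01) - ((x21 - x12)*(x21 - x12) + (x02 - x20)*(x02 - x20) + (x10 - x01)*(x10 - x01)))) = (1%:R + x22 + 2%:R*x12*x21 + 2%:R*x12*x21*x22 - 2%:R*x11*x22 - 2%:R*x11*x22*x22 - 2%:R*x01*x12*x20 + 2%:R*x01*x10*x22 + 4%:R*x00*x12*x21 - 2%:R*x00*x11*x22) * r0 + (2%:R*x01*x10 + 2%:R*x01*x10*x22 + 2%:R*x00 - 2%:R*x00*x12*x21 - 2%:R*x00*x12*x12 - 2%:R*x00*x11*x11) * r1 + (- 2%:R*x12*x20 - 2%:R*x12*x20*x22 - 2%:R*x11*x12*x20 + 2%:R*x10*x22 + 2%:R*x10*x22*x22 + 2%:R*x10*x12*x21 + 2%:R*x10*x11*x22 - 2%:R*x02*x21 - 2%:R*x02*x21*x22 + 2%:R*x01*x22 + 2%:R*x01*x22*x22 + 2%:R*x01*x02*x20 - 4%:R*x00*x02*x21 - 2%:R*x00*x01 - 2%:R*x00*x00*x10) * r2 + (2%:R*x01 - 2%:R*x01*x12*x12 + 2%:R*x01*x11 - 2%:R*x01*x11*x11 - 2%:R*x01*x10*x10 + 2%:R*x00*x12*x20 - 2%:R*x00*x10*x22 + 2%:R*x00*x10*x11) * r3 + (- 2%:R*x20 + 2%:R*x12*x12*x20 - 2%:R*x11*x20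 + 2%:R*x11*x11*x20 + 2%:R*x10*x21 - 2%:R*x10*x12*x22 - 2%:R*x10*x11*x21 - 2%:R*x10*x11*x12 + 2%:R*x02*x11 + 2%:R*x02*x11*x22 - 2%:R*x01*x12 - 2%:R*x01*x12*x22 - 2%:R*x01*x02*x10 + 2%:R*x00*x02*x11 - 2%:R*x00*x01*x12) * r4 + (2%:R*x01*x12 - 2%:R*x01*x10*x20 + 2%:R*x00*x10*x21 + 2%:R*x00*x10*x12) * r5 + (1%:R + x22 + 2%:R*x02*x20 + 2%:R*x02*x11*x20 - 2%:R*x02*x10*x21 - 2%:R*x01*x10 + 2%:R*x01*x10*x11 - 2%:R*x00 - 2%:R*x00*x22 - 2%:R*x00*x22*x22 - 2%:R*x00*x11*x22 + 2%:R*x00*x01*x01 + 2%:R*x00*x00*x00) * r6 + (- 2%:R*x02*x10 + 2%:R*x01*x10*x21 - 2%:R*x00*x21 + 2%:R*x00*x12 + 2%:R*x00*x12*x22 + 2%:R*x00*x11*x12 + 2%:R*x00*x01*x02) * r8 + (1%:R + x22 - 2%:R*x01*x10 + 2%:R*x00*x11) * r10 + (- 2%:R - 2%:R*x22 + 2%:R*x11 + 2%:R*x11*x22 + 2%:R*x11*x11 + 2%:R*x10*x10 + 2%:R*x01*x01 + 2%:R*x00 + 2%:R*x00*x22 + 2%:R*x00*x00) * r12.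
Proof. move=> h0 h1 h2 h3 h4 h5 h6 h7 h8 h9 h10 h11 h12; rewrite ?h0 ?h1 ?h2 ?h3 ?h4 ?h5 ?h6 ?h8 ?h10 ?h12; ring. Qed.

Lemma Ez00 (x00 x01 x02 x10 x11 x12 x20 x21 x22 : R)
  (h0 : (x00*x00 + x01*x01 + x02*x02 - 1) = 0)
  (h1 : (x00*x00 + x10*x10 + x20*x20 - 1) = 0)
  (h2 : (x00*x10 + x01*x11 + x02*x12) = 0)
  (h3 : (x00*x01 + x10*x11 + x20*x21) = 0)
  (h4 : (x00*x20 + x01*x21 + x02*x22) = 0)
  (h5 : (x00*x02 + x10*x12 + x20*x22) = 0)
  (h6 : (x10*x10 + x11*x11 + x12*x12 - 1) = 0)
  (h7 : (x01*x01 + x11*x11 + x21*x21 - 1) = 0)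
  (h8 : (x10*x20 + x11*x21 + x12*x22) = 0)
  (h9 : (x01*x02 + x11*x12 + x21*x22) = 0)
  (h10 : (x20*x20 + x21*x21 + x22*x22 - 1) = 0)
  (h11 : (x02*x02 + x12*x12 + x22*x22 - 1) = 0)
  (h12 : (x00*x11*x22 + x01*x12*x20 + x02*x10*x21 - x00*x12*x21 - x01*x10*x22 - x02*x11*x20 - 1) = 0) :
  (((1 + x00 + x11 + x22)*(1 + x00 + x11 + x22) + ((x21 - x12)*(x21 - x12) + (x02 - x20)*(x02 - x20) + (x10 - x01)*(x10 - x01))) * (x00 - 1) - 2%:R * ((x21 - x12)*(x21 - x12) - ((x21 - x12)*(x21 - x12) + (x02 - x20)*(x02 - x20) + (x10 - x01)*(x10 - x01)))) = 0.
Proof. by rewrite (@cert00 x00 x01 x02 x10 x11 x12 x20 x21 x22 0 0 0 0 0 0 0 0 0 0 0 0 0 (esym h0) (esym h1) (esym h2) (esym h3) (esym h4) (esym h5) (esym h6) (esym h7) (esym h8) (esym h9) (esym h10) (esym h11) (esym h12)); ring. Qed.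

Lemma Ez01 (x00 x01 x02 x10 x11 x12 x20 x21 x22 : R)
  (h0 : (x00*x00 + x01*x01 + x02*x02 - 1) = 0)
  (h1 : (x00*x00 + x10*x10 + x20*x20 - 1) = 0)
  (h2 : (x00*x10 + x01*x11 + x02*x12) = 0)
  (h3 : (x00*x01 + x10*x11 + x20*x21) = 0)
  (h4 : (x00*x20 + x01*x21 + x02*x22) = 0)
  (h5 : (x00*x02 + x10*x12 + x20*x22) = 0)
  (h6 : (x10*x10 + x11*x11 + x12*x12 - 1) = 0)
  (h7 : (x01*x01 + x11*x11 + x21*x21 - 1) = 0)
  (h8 : (x10*x20 + x11*x21 + x12*x22) = 0)
  (h9 : (x01*x02 + x11*x12 + x21*x22) = 0)
  (h10 : (x20*x20 + x21*x21 + x22*x22 - 1) = 0)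
  (h11 : (x02*x02 + x12*x12 + x22*x22 - 1) = 0)
  (h12 : (x00*x11*x22 + x01*x12*x20 + x02*x10*x21 - x00*x12*x21 - x01*x10*x22 - x02*x11*x20 - 1) = 0) :
  (((1 + x00 + x11 + x22)*(1 + x00 + x11 + x22) + ((x21 - x12)*(x21 - x12) + (x02 - x20)*(x02 - x20) + (x10 - x01)*(x10 - x01))) * x01 - 2%:R * ((x21 - x12)*(x02 - x20) + (1 + x00 + x11 + x22)*(x01 - x10))) = 0.
Proof. by rewrite (@cert01 x00 x01 x02 x10 x11 x12 x20 x21 x22 0 0 0 0 0 0 0 0 0 0 0 0 0 (esym h0) (esym h1) (esym h2) (esym h3) (esym h4) (esym h5) (esym h6) (esym h7) (esym h8) (esym h9) (esym h10) (esym h11) (esym h12)); ring. Qed.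

Lemma Ez02 (x00 x01 x02 x10 x11 x12 x20 x21 x22 : R)
  (h0 : (x00*x00 + x01*x01 + x02*x02 - 1) = 0)
  (h1 : (x00*x00 + x10*x10 + x20*x20 - 1) = 0)
  (h2 : (x00*x10 + x01*x11 + x02*x12) = 0)
  (h3 : (x00*x01 + x10*x11 + x20*x21) = 0)
  (h4 : (x00*x20 + x01*x21 + x02*x22) = 0)
  (h5 : (x00*x02 + x10*x12 + x20*x22) = 0)
  (h6 : (x10*x10 + x11*x11 + x12*x12 - 1) = 0)
  (h7 : (x01*x01 + x11*x11 + x21*x21 - 1) = 0)
  (h8 : (x10*x20 + x11*x21 + x12*x22) = 0)
  (h9 : (x01*x02 + x11*x12 + x21*x22) = 0)
  (h10 : (x20*x20 + x21*x21 + x22*x22 - 1) = 0)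
  (h11 : (x02*x02 + x12*x12 + x22*x22 - 1) = 0)
  (h12 : (x00*x11*x22 + x01*x12*x20 + x02*x10*x21 - x00*x12*x21 - x01*x10*x22 - x02*x11*x20 - 1) = 0) :
  (((1 + x00 + x11 + x22)*(1 + x00 + x11 + x22) + ((x21 - x12)*(x21 - x12) + (x02 - x20)*(x02 - x20) + (x10 - x01)*(x10 - x01))) * x02 - 2%:R * ((x21 - x12)*(x10 - x01) + (1 + x00 + x11 + x22)*(x02 - x20))) = 0.
Proof. by rewrite (@cert02 x00 x01 x02 x10 x11 x12 x20 x21 x22 0 0 0 0 0 0 0 0 0 0 0 0 0 (esym h0) (esym h1) (esym h2) (esym h3) (esym h4) (esym h5) (esym h6) (esym h7) (esym h8) (esym h9) (esym h10) (esym h11) (esym h12)); ring. Qed.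

Lemma Ez10 (x00 x01 x02 x10 x11 x12 x20 x21 x22 : R)
  (h0 : (x00*x00 + x01*x01 + x02*x02 - 1) = 0)
  (h1 : (x00*x00 + x10*x10 + x20*x20 - 1) = 0)
  (h2 : (x00*x10 + x01*x11 + x02*x12) = 0)
  (h3 : (x00*x01 + x10*x11 + x20*x21) = 0)
  (h4 : (x00*x20 + x01*x21 + x02*x22) = 0)
  (h5 : (x00*x02 + x10*x12 + x20*x22) = 0)
  (h6 : (x10*x10 + x11*x11 + x12*x12 - 1) = 0)
  (h7 : (x01*x01 + x11*x11 + x21*x21 - 1) = 0)
  (h8 : (x10*x20 + x11*x21 + x12*x22) = 0)
  (h9 : (x01*x02 + x11*x12 + x21*x22) = 0)
  (h10 : (x20*x20 + x21*x21 + x22*x22 - 1) = 0)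
  (h11 : (x02*x02 + x12*x12 + x22*x22 - 1) = 0)
  (h12 : (x00*x11*x22 + x01*x12*x20 + x02*x10*x21 - x00*x12*x21 - x01*x10*x22 - x02*x11*x20 - 1) = 0) :
  (((1 + x00 + x11 + x22)*(1 + x00 + x11 + x22) + ((x21 - x12)*(x21 - x12) + (x02 - x20)*(x02 - x20) + (x10 - x01)*(x10 - x01))) * x10 - 2%:R * ((x02 - x20)*(x21 - x12) + (1 + x00 + x11 + x22)*(x10 - x01))) = 0.
Proof. by rewrite (@cert10 x00 x01 x02 x10 x11 x12 x20 x21 x22 0 0 0 0 0 0 0 0 0 0 0 0 0 (esym h0) (esym h1) (esym h2) (esym h3) (esym h4) (esym h5) (esym h6) (esym h7) (esym h8) (esym h9) (esym h10) (esym h11) (esym h12)); ring. Qed.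

Lemma Ez11 (x00 x01 x02 x10 x11 x12 x20 x21 x22 : R)
  (h0 : (x00*x00 + x01*x01 + x02*x02 - 1) = 0)
  (h1 : (x00*x00 + x10*x10 + x20*x20 - 1) = 0)
  (h2 : (x00*x10 + x01*x11 + x02*x12) = 0)
  (h3 : (x00*x01 + x10*x11 + x20*x21) = 0)
  (h4 : (x00*x20 + x01*x21 + x02*x22) = 0)
  (h5 : (x00*x02 + x10*x12 + x20*x22) = 0)
  (h6 : (x10*x10 + x11*x11 + x12*x12 - 1) = 0)
  (h7 : (x01*x01 + x11*x11 + x21*x21 - 1) = 0)
  (h8 : (x10*x20 + x11*x21 + x12*x22) = 0)
  (h9 : (x01*x02 + x11*x12 + x21*x22) = 0)
  (h10 : (x20*x20 + x21*x21 + x22*x22 - 1) = 0)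
  (h11 : (x02*x02 + x12*x12 + x22*x22 - 1) = 0)
  (h12 : (x00*x11*x22 + x01*x12*x20 + x02*x10*x21 - x00*x12*x21 - x01*x10*x22 - x02*x11*x20 - 1) = 0) :
  (((1 + x00 + x11 + x22)*(1 + x00 + x11 + x22) + ((x21 - x12)*(x21 - x12) + (x02 - x20)*(x02 - x20) + (x10 - x01)*(x10 - x01))) * (x11 - 1) - 2%:R * ((x02 - x20)*(x02 - x20) - ((x21 - x12)*(x21 - x12) + (x02 - x20)*(x02 - x20) + (x10 - x01)*(x10 - x01)))) = 0.
Proof. by rewrite (@cert11 x00 x01 x02 x10 x11 x12 x20 x21 x22 0 0 0 0 0 0 0 0 0 0 0 0 0 (esym h0) (esym h1) (esym h2) (esym h3) (esym h4) (esym h5) (esym h6) (esym h7) (esym h8) (esym h9) (esym h10) (esym h11) (esym h12)); ring. Qed.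

Lemma Ez12 (x00 x01 x02 x10 x11 x12 x20 x21 x22 : R)
  (h0 : (x00*x00 + x01*x01 + x02*x02 - 1) = 0)
  (h1 : (x00*x00 + x10*x10 + x20*x20 - 1) = 0)
  (h2 : (x00*x10 + x01*x11 + x02*x12) = 0)
  (h3 : (x00*x01 + x10*x11 + x20*x21) = 0)
  (h4 : (x00*x20 + x01*x21 + x02*x22) = 0)
  (h5 : (x00*x02 + x10*x12 + x20*x22) = 0)
  (h6 : (x10*x10 + x11*x11 + x12*x12 - 1) = 0)
  (h7 : (x01*x01 + x11*x11 + x21*x21 - 1) = 0)
  (h8 : (x10*x20 + x11*x21 + x12*x22) = 0)
  (h9 : (x01*x02 + x11*x12 + x21*x22) = 0)
  (h10 : (x20*x20 + x21*x21 + x22*x22 - 1) = 0)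
  (h11 : (x02*x02 + x12*x12 + x22*x22 - 1) = 0)
  (h12 : (x00*x11*x22 + x01*x12*x20 + x02*x10*x21 - x00*x12*x21 - x01*x10*x22 - x02*x11*x20 - 1) = 0) :
  (((1 + x00 + x11 + x22)*(1 + x00 + x11 + x22) + ((x21 - x12)*(x21 - x12) + (x02 - x20)*(x02 - x20) + (x10 - x01)*(x10 - x01))) * x12 - 2%:R * ((x02 - x20)*(x10 - x01) + (1 + x00 + x11 + x22)*(x12 - x21))) = 0.
Proof. by rewrite (@cert12 x00 x01 x02 x10 x11 x12 x20 x21 x22 0 0 0 0 0 0 0 0 0 0 0 0 0 (esym h0) (esym h1) (esym h2) (esym h3) (esym h4) (esym h5) (esym h6) (esym h7) (esym h8) (esym h9) (esym h10) (esym h11) (esym h12)); ring. Qed.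

Lemma Ez20 (x00 x01 x02 x10 x11 x12 x20 x21 x22 : R)
  (h0 : (x00*x00 + x01*x01 + x02*x02 - 1) = 0)
  (h1 : (x00*x00 + x10*x10 + x20*x20 - 1) = 0)
  (h2 : (x00*x10 + x01*x11 + x02*x12) = 0)
  (h3 : (x00*x01 + x10*x11 + x20*x21) = 0)
  (h4 : (x00*x20 + x01*x21 + x02*x22) = 0)
  (h5 : (x00*x02 + x10*x12 + x20*x22) = 0)
  (h6 : (x10*x10 + x11*x11 + x12*x12 - 1) = 0)
  (h7 : (x01*x01 + x11*x11 + x21*x21 - 1) = 0)
  (h8 : (x10*x20 + x11*x21 + x12*x22) = 0)
  (h9 : (x01*x02 + x11*x12 + x21*x22) = 0)
  (h10 : (x20*x20 + x21*x21 + x22*x22 - 1) = 0)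
  (h11 : (x02*x02 + x12*x12 + x22*x22 - 1) = 0)
  (h12 : (x00*x11*x22 + x01*x12*x20 + x02*x10*x21 - x00*x12*x21 - x01*x10*x22 - x02*x11*x20 - 1) = 0) :
  (((1 + x00 + x11 + x22)*(1 + x00 + x11 + x22) + ((x21 - x12)*(x21 - x12) + (x02 - x20)*(x02 - x20) + (x10 - x01)*(x10 - x01))) * x20 - 2%:R * ((x10 - x01)*(x21 - x12) + (1 + x00 + x11 + x22)*(x20 - x02))) = 0.
Proof. by rewrite (@cert20 x00 x01 x02 x10 x11 x12 x20 x21 x22 0 0 0 0 0 0 0 0 0 0 0 0 0 (esym h0) (esym h1) (esym h2) (esym h3) (esym h4) (esym h5) (esym h6) (esym h7) (esym h8) (esym h9) (esym h10) (esym h11) (esym h12)); ring. Qed.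

Lemma Ez21 (x00 x01 x02 x10 x11 x12 x20 x21 x22 : R)
  (h0 : (x00*x00 + x01*x01 + x02*x02 - 1) = 0)
  (h1 : (x00*x00 + x10*x10 + x20*x20 - 1) = 0)
  (h2 : (x00*x10 + x01*x11 + x02*x12) = 0)
  (h3 : (x00*x01 + x10*x11 + x20*x21) = 0)
  (h4 : (x00*x20 + x01*x21 + x02*x22) = 0)
  (h5 : (x00*x02 + x10*x12 + x20*x22) = 0)
  (h6 : (x10*x10 + x11*x11 + x12*x12 - 1) = 0)
  (h7 : (x01*x01 + x11*x11 + x21*x21 - 1) = 0)
  (h8 : (x10*x20 + x11*x21 + x12*x22) = 0)
  (h9 : (x01*x02 + x11*x12 + x21*x22) = 0)
  (h10 : (x20*x20 + x21*x21 + x22*x22 - 1) = 0)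
  (h11 : (x02*x02 + x12*x12 + x22*x22 - 1) = 0)
  (h12 : (x00*x11*x22 + x01*x12*x20 + x02*x10*x21 - x00*x12*x21 - x01*x10*x22 - x02*x11*x20 - 1) = 0) :
  (((1 + x00 + x11 + x22)*(1 + x00 + x11 + x22) + ((x21 - x12)*(x21 - x12) + (x02 - x20)*(x02 - x20) + (x10 - x01)*(x10 - x01))) * x21 - 2%:R * ((x10 - x01)*(x02 - x20) + (1 + x00 + x11 + x22)*(x21 - x12))) = 0.
Proof. by rewrite (@cert21 x00 x01 x02 x10 x11 x12 x20 x21 x22 0 0 0 0 0 0 0 0 0 0 0 0 0 (esym h0) (esym h1) (esym h2) (esym h3) (esym h4) (esym h5) (esym h6) (esym h7) (esym h8) (esym h9) (esym h10) (esym h11) (esym h12)); ring. Qed.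

Lemma Ez22 (x00 x01 x02 x10 x11 x12 x20 x21 x22 : R)
  (h0 : (x00*x00 + x01*x01 + x02*x02 - 1) = 0)
  (h1 : (x00*x00 + x10*x10 + x20*x20 - 1) = 0)
  (h2 : (x00*x10 + x01*x11 + x02*x12) = 0)
  (h3 : (x00*x01 + x10*x11 + x20*x21) = 0)
  (h4 : (x00*x20 + x01*x21 + x02*x22) = 0)
  (h5 : (x00*x02 + x10*x12 + x20*x22) = 0)
  (h6 : (x10*x10 + x11*x11 + x12*x12 - 1) = 0)
  (h7 : (x01*x01 + x11*x11 + x21*x21 - 1) = 0)
  (h8 : (x10*x20 + x11*x21 + x12*x22) = 0)
  (h9 : (x01*x02 + x11*x12 + x21*x22) = 0)
  (h10 : (x20*x20 + x21*x21 + x22*x22 - 1) = 0)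
  (h11 : (x02*x02 + x12*x12 + x22*x22 - 1) = 0)
  (h12 : (x00*x11*x22 + x01*x12*x20 + x02*x10*x21 - x00*x12*x21 - x01*x10*x22 - x02*x11*x20 - 1) = 0) :
  (((1 + x00 + x11 + x22)*(1 + x00 + x11 + x22) + ((x21 - x12)*(x21 - x12) + (x02 - x20)*(x02 - x20) + (x10 - x01)*(x10 - x01))) * (x22 - 1) - 2%:R * ((x10 - x01)*(x10 - x01) - ((x21 - x12)*(x21 - x12) + (x02 - x20)*(x02 - x20) + (x10 - x01)*(x10 - x01)))) = 0.
Proof. by rewrite (@cert22 x00 x01 x02 x10 x11 x12 x20 x21 x22 0 0 0 0 0 0 0 0 0 0 0 0 0 (esym h0) (esym h1) (esym h2) (esym h3) (esym h4) (esym h5) (esym h6) (esym h7) (esym h8) (esym h9) (esym h10) (esym h11) (esym h12)); ring. Qed.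

Definition sq3 (a b c : R) := a*a + b*b + c*c.
Definition cq (a b c t : R) := 2 / (1 + t*t*sq3 a b c).
Definition Cay (a b c t : R) : 'M[R]_3 :=
  mx3 (1 + cq a b c t * (t*t*(a*a - sq3 a b c)))
      (cq a b c t * (t*t*(a*b) + t*c))
      (cq a b c t * (t*t*(a*c) - t*b))
      (cq a b c t * (t*t*(b*a) - t*c))
      (1 + cq a b c t * (t*t*(b*b - sq3 a b c)))
      (cq a b c t * (t*t*(b*c) + t*a))
      (cq a b c t * (t*t*(c*a) + t*b))
      (cq a b c t * (t*t*(c*b) - t*a))
      (1 + cq a b c t * (t*t*(c*c - sq3 a b c))).

Definition SO3' (M : 'M[R]_3) := M *m M^T = 1%:M /\ \det M = 1.

Lemma den_pos (a b c t : R) : 1 + t*t*sq3 a b c != 0.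
Proof.
rewrite /sq3 lt0r_neq0 //.
have h1 : 0 <= t*t by rewrite -expr2 sqr_ge0.
have h2 : 0 <= a*a + b*b + c*c by rewrite !addr_ge0 // -expr2 sqr_ge0.
have := mulr_ge0 h1 h2; lra.
Qed.

Lemma Cay_SO3 a b c t : SO3' (Cay a b c t).
Proof.
have hd := den_pos a b c t.
rewrite /SO3' /Cay mx3_tr mx3_mul mx3_one mx3_det /cq; split.
  congr mx3; rewrite /sq3; field; rewrite -/(sq3 a b c) //.
rewrite /sq3; field; rewrite -/(sq3 a b c) //.
Qed.

Lemma Cay0 a b c : Cay a b c 0 = 1%:M.
Proof. rewrite /Cay mx3_one /cq; congr mx3; ring. Qed.

Lemma mx3_inj a b c d e f g h k a' b' c' d' e' f' g' h' k' :
  mx3 a b c d e f g h k = mx3 a' b' c' d' e' f' g' h' k' ->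
  [/\ a = a', b = b', c = c', d = d' & [/\ e = e', f = f', g = g', h = h' & k = k']].
Proof.
move=> H.
have F := fun i j => congr1 (fun M : 'M[R]_3 => M i j) H.
have := F i0 i0; have := F i0 i1; have := F i0 i2;
have := F i1 i0; have := F i1 i1; have := F i1 i2;
have := F i2 i0; have := F i2 i1; have := F i2 i2; rewrite !mxE /=.
by move=> *; split.
Qed.

Lemma fix_step (L x e D : R) : D != 0 -> L = x - e / D -> e = 0 -> L = x.
Proof. by move=> _ -> ->; rewrite mul0r subr0. Qed.

Lemma Cay_inv x00 x01 x02 x10 x11 x12 x20 x21 x22 :
  SO3' (mx3 x00 x01 x02 x10 x11 x12 x20 x21 x22) -> 1 + x00 + x11 + x22 != 0 ->
  Cay (-(x21 - x12)/(1 + x00 + x11 + x22)) (-(x02 - x20)/(1 + x00 + x11 + x22))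
      (-(x10 - x01)/(1 + x00 + x11 + x22)) 1
   = mx3 x00 x01 x02 x10 x11 x12 x20 x21 x22.
Proof.
move=> [HO HD] Ht.
have HP := mulmx1C HO.
rewrite mx3_tr mx3_mul mx3_one in HO.
rewrite mx3_tr mx3_mul mx3_one in HP.
rewrite mx3_det in HD.
case/mx3_inj: HO => q00 q01 q02 q10 [q11 q12 q20 q21 q22].
case/mx3_inj: HP => p00 p01 p02 p10 [p11 p12 p20 p21 p22].
have hDn : ((1 + x00 + x11 + x22)*(1 + x00 + x11 + x22) + ((x21 - x12)*(x21 - x12) + (x02 - x20)*(x02 - x20) + (x10 - x01)*(x10 - x01))) != 0.
  rewrite lt0r_neq0 //.
  have : 0 < (1 + x00 + x11 + x22) ^+ 2 by rewrite exprn_even_gt0 // Ht orbT.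
  rewrite expr2 => h1.
  have h2 : 0 <= (x21 - x12)*(x21 - x12) + (x02 - x20)*(x02 - x20) + (x10 - x01)*(x10 - x01).
    by rewrite !addr_ge0 // -expr2 sqr_ge0.
  lra.
have r0 : (x00*x00 + x01*x01 + x02*x02 - 1) = 0 by lra.
have r1 : (x00*x00 + x10*x10 + x20*x20 - 1) = 0 by lra.
have r2 : (x00*x10 + x01*x11 + x02*x12) = 0 by lra.
have r3 : (x00*x01 + x10*x11 + x20*x21) = 0 by lra.
have r4 : (x00*x20 + x01*x21 + x02*x22) = 0 by lra.
have r5 : (x00*x02 + x10*x12 + x20*x22) = 0 by lra.
have r6 : (x10*x10 + x11*x11 + x12*x12 - 1) = 0 by lra.
have r7 : (x01*x01 + x11*x11 + x21*x21 - 1) = 0 by lra.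
have r8 : (x10*x20 + x11*x21 + x12*x22) = 0 by lra.
have r9 : (x01*x02 + x11*x12 + x21*x22) = 0 by lra.
have r10 : (x20*x20 + x21*x21 + x22*x22 - 1) = 0 by lra.
have r11 : (x02*x02 + x12*x12 + x22*x22 - 1) = 0 by lra.
have r12 : (x00*x11*x22 + x01*x12*x20 + x02*x10*x21 - x00*x12*x21 - x01*x10*x22 - x02*x11*x20 - 1) = 0 by lra.
rewrite /Cay /cq /sq3; congr mx3.
- apply: (fix_step hDn _ (@Ez00 x00 x01 x02 x10 x11 x12 x20 x21 x22 r0 r1 r2 r3 r4 r5 r6 r7 r8 r9 r10 r11 r12)); field; by rewrite ?hDn ?Ht.
- apply: (fix_step hDn _ (@Ez01 x00 x01 x02 x10 x11 x12 x20 x21 x22 r0 r1 r2 r3 r4 r5 r6 r7 r8 r9 r10 r11 r12)); field; by rewrite ?hDn ?Ht.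
- apply: (fix_step hDn _ (@Ez02 x00 x01 x02 x10 x11 x12 x20 x21 x22 r0 r1 r2 r3 r4 r5 r6 r7 r8 r9 r10 r11 r12)); field; by rewrite ?hDn ?Ht.
- apply: (fix_step hDn _ (@Ez10 x00 x01 x02 x10 x11 x12 x20 x21 x22 r0 r1 r2 r3 r4 r5 r6 r7 r8 r9 r10 r11 r12)); field; by rewrite ?hDn ?Ht.
- apply: (fix_step hDn _ (@Ez11 x00 x01 x02 x10 x11 x12 x20 x21 x22 r0 r1 r2 r3 r4 r5 r6 r7 r8 r9 r10 r11 r12)); field; by rewrite ?hDn ?Ht.
- apply: (fix_step hDn _ (@Ez12 x00 x01 x02 x10 x11 x12 x20 x21 x22 r0 r1 r2 r3 r4 r5 r6 r7 r8 r9 r10 r11 r12)); field; by rewrite ?hDn ?Ht.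
- apply: (fix_step hDn _ (@Ez20 x00 x01 x02 x10 x11 x12 x20 x21 x22 r0 r1 r2 r3 r4 r5 r6 r7 r8 r9 r10 r11 r12)); field; by rewrite ?hDn ?Ht.
- apply: (fix_step hDn _ (@Ez21 x00 x01 x02 x10 x11 x12 x20 x21 x22 r0 r1 r2 r3 r4 r5 r6 r7 r8 r9 r10 r11 r12)); field; by rewrite ?hDn ?Ht.
- apply: (fix_step hDn _ (@Ez22 x00 x01 x02 x10 x11 x12 x20 x21 x22 r0 r1 r2 r3 r4 r5 r6 r7 r8 r9 r10 r11 r12)); field; by rewrite ?hDn ?Ht.
Qed.

Lemma SO3'_mul M N : SO3' M -> SO3' N -> SO3' (M *m N).
Proof.
move=> [HM DM] [HN DN]; split; last by rewrite det_mulmx DM DN mulr1.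
by rewrite trmx_mul mulmxA -(mulmxA M) HN mulmx1 HM.
Qed.

Lemma SO3'_tr M : SO3' M -> SO3' M^T.
Proof.
move=> [HM DM]; split; last by rewrite det_tr.
by rewrite trmxK; apply: mulmx1C.
Qed.

Lemma trace_eta (N : 'M[R]_3) : \tr N = N i0 i0 + N i1 i1 + N i2 i2.
Proof. by rewrite {1}(mx3_eta N) mx3_trace. Qed.

Lemma cand (X : 'M[R]_3) : exists a b c : R, 1 + \tr ((Cay a b c 1)^T *m X) != 0.
Proof.
rewrite (mx3_eta X).
move: (X i0 i0) (X i0 i1) (X i0 i2) (X i1 i0) (X i1 i1) (X i1 i2) (X i2 i0) (X i2 i1) (X i2 i2)
  => x00 x01 x02 x10 x11 x12 x20 x21 x22.
have T a b c : 1 + \tr ((Cay a b c 1)^T *m mx3 x00 x01 x02 x10 x11 x12 x20 x21 x22) =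
  1 + \tr ((Cay a b c 1)^T *m mx3 x00 x01 x02 x10 x11 x12 x20 x21 x22) by [].
have t0 : 1 + \tr ((Cay 0 0 0 1)^T *m mx3 x00 x01 x02 x10 x11 x12 x20 x21 x22) = 1 + x00 + x11 + x22.
  by rewrite /Cay /cq /sq3 mx3_tr mx3_mul mx3_trace; field.
have t1 : 1 + \tr ((Cay 1 0 0 1)^T *m mx3 x00 x01 x02 x10 x11 x12 x20 x21 x22) = 1 + x00 + x12 - x21.
  by rewrite /Cay /cq /sq3 mx3_tr mx3_mul mx3_trace; field.
have t2 : 1 + \tr ((Cay (-1) 0 0 1)^T *m mx3 x00 x01 x02 x10 x11 x12 x20 x21 x22) = 1 + x00 - x12 + x21.
  by rewrite /Cay /cq /sq3 mx3_tr mx3_mul mx3_trace; field.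
have t3 : 1 + \tr ((Cay 0 1 0 1)^T *m mx3 x00 x01 x02 x10 x11 x12 x20 x21 x22) = 1 - x02 + x11 + x20.
  by rewrite /Cay /cq /sq3 mx3_tr mx3_mul mx3_trace; field.
have t4 : 1 + \tr ((Cay 0 (-1) 0 1)^T *m mx3 x00 x01 x02 x10 x11 x12 x20 x21 x22) = 1 + x02 + x11 - x20.
  by rewrite /Cay /cq /sq3 mx3_tr mx3_mul mx3_trace; field.
have t5 : 1 + \tr ((Cay 0 0 1 1)^T *m mx3 x00 x01 x02 x10 x11 x12 x20 x21 x22) = 1 + x01 - x10 + x22.
  by rewrite /Cay /cq /sq3 mx3_tr mx3_mul mx3_trace; field.
have t6 : 1 + \tr ((Cay 0 0 (-1) 1)^T *m mx3 x00 x01 x02 x10 x11 x12 x20 x21 x22) = 1 - x01 + x10 + x22.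
  by rewrite /Cay /cq /sq3 mx3_tr mx3_mul mx3_trace; field.
case: (eqVneq (1 + x00 + x11 + x22) 0) => [e0|n]; last by exists 0, 0, 0; rewrite t0.
case: (eqVneq (1 + x00 + x12 - x21) 0) => [e1|n]; last by exists 1, 0, 0; rewrite t1.
case: (eqVneq (1 + x00 - x12 + x21) 0) => [e2|n]; last by exists (-1), 0, 0; rewrite t2.
case: (eqVneq (1 - x02 + x11 + x20) 0) => [e3|n]; last by exists 0, 1, 0; rewrite t3.
case: (eqVneq (1 + x02 + x11 - x20) 0) => [e4|n]; last by exists 0, (-1), 0; rewrite t4.
case: (eqVneq (1 + x01 - x10 + x22) 0) => [e5|n]; last by exists 0, 0, 1; rewrite t5.
case: (eqVneq (1 - x01 + x10 + x22) 0) => [e6|n]; last by exists 0, 0, (-1); rewrite t6.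
exfalso; lra.
Qed.

Lemma decomp (h : 'M[R]_3) : SO3' h ->
  exists a b c a' b' c', h = Cay a b c 1 *m Cay a' b' c' 1.
Proof.
move=> Hh.
have [a [b [c Hn]]] := cand h.
set k := Cay a b c 1.
have Hk : SO3' k := Cay_SO3 a b c 1.
set N := k^T *m h.
have HN : SO3' N by apply: SO3'_mul => //; apply: SO3'_tr.
have HN' := HN; rewrite (mx3_eta N) in HN'.
have Ht : 1 + N i0 i0 + N i1 i1 + N i2 i2 != 0 by move: Hn; rewrite trace_eta !addrA.
have := Cay_inv HN' Ht; rewrite -mx3_eta => HC.
exists a, b, c, (-(N i2 i1 - N i1 i2)/(1 + N i0 i0 + N i1 i1 + N i2 i2)),
  (-(N i0 i2 - N i2 i0)/(1 + N i0 i0 + N i1 i1 + N i2 i2)),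
  (-(N i1 i0 - N i0 i1)/(1 + N i0 i0 + N i1 i1 + N i2 i2)).
by rewrite HC /N mulmxA (proj1 Hk) mul1mx.
Qed.
Lemma mx_cont (Fm : R -> 'M[R]_3) :
  (forall i j, continuous (fun t => Fm t i j)) -> continuous Fm.
Proof.
move=> H t.
have FF : Filter (Fm @ t) := fmap_filter _ (nbhs_filter t).
apply/(@cvg_mx_entourageP _ 3 3 (Fm @ t) FF (Fm t)) => A entA.
apply: (@filter_forall _ _ (fun i (N : 'M[R]_3) => forall j, (Fm t i j, N i j) \in A) _ FF) => i.
apply: (@filter_forall _ _ (fun j (N : 'M[R]_3) => (Fm t i j, N i j) \in A) _ FF) => j.
have h := H i j t.
move/cvg_entourageP: h => /(_ A entA) h.
have h2 : \forall s \near t, (Fm t i j, Fm s i j) \in A.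
  near=> s; rewrite inE; near: s; exact: h.
exact: h2.
Unshelve. all: by end_near.
Qed.

Lemma entry_cont (F : R -> 'M[R]_3) i j :
  continuous F -> continuous (fun t => F t i j).
Proof.
move=> H t; exact: (@continuous_comp _ _ _ F (fun M : 'M[R]_3 => M i j) t (H t) (@coord_continuous R 3 3 i j (F t))).
Qed.

Lemma const_of_finite (G : set 'M[R]_3) (psi : R -> 'M[R]_3) :
  finite_set G -> continuous psi -> (forall t, G (psi t)) -> psi 0 = psi 1.
Proof.
move=> fG cpsi Gpsi.
have acc : accessible_space 'M[R]_3 by apply: hausdorff_accessible; exact: norm_hausdorff.
have fcl := (@accessible_finite_set_closed _).1 acc.
have conT : connected [set: R].
  by apply/connected_intervalP => x y _ _ z _.
set B := psi @^-1` [set psi 0].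
suff : B = setT by move=> eB; have : B 1 by rewrite eB.
apply: conT.
- by exists 0.
- exists (psi @^-1` (~` (G `\ psi 0))).
    have := (continuousP psi).1 cpsi; apply.
    rewrite openC; apply: fcl; apply: sub_finite_set fG; exact: subDsetl.
  rewrite setTI; apply/seteqP; split => t /=.
    by move=> -> [_]; apply.
  move=> h; apply: contrapT => ne; apply: h; split => //; exact: Gpsi.
- exists B; last by rewrite setTI.
  rewrite /B -[X in closed X]setCK closedC preimage_setC.
  apply: ((continuousP psi).1 cpsi); rewrite openC; apply: fcl; exact: finite_set1.
Qed.



Lemma contC (c : R) : continuous (fun _ : R => c).
Proof. by move=> x; exact: cvg_cst. Qed.
Lemma contI : continuous (fun x : R => x).
Proof. by move=> x; exact: cvg_id. Qed.
Lemma contD (f g : R -> R) : continuous f -> continuous g -> continuous (fun x => f x + g x).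
Proof. by move=> cf cg x; exact: cvgD (cf x) (cg x). Qed.
Lemma contB (f g : R -> R) : continuous f -> continuous g -> continuous (fun x => f x - g x).
Proof. by move=> cf cg x; exact: cvgB (cf x) (cg x). Qed.
Lemma contM (f g : R -> R) : continuous f -> continuous g -> continuous (fun x => f x * g x).
Proof. by move=> cf cg x; exact: cvgM (cf x) (cg x). Qed.
Lemma contV (f : R -> R) : (forall x, f x != 0) -> continuous f -> continuous (fun x => (f x)^-1).
Proof. by move=> nf cf x; exact: cvgV (nf x) (cf x). Qed.

Lemma cont_ext (f g : R -> R) : (forall x, g x = f x) -> continuous f -> continuous g.
Proof. by move=> e; rewrite (boolp.funext e). Qed.

Lemma cont_form (m u v a b c : R) :
  continuous (fun t => m + cq a b c t * (t*t*u - t*v)).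
Proof.
apply: (@contD (fun _ => m)); first exact: contC.
apply: (@contM (cq a b c)).
  rewrite /cq; apply: (@contM (fun _ => 2)); first exact: contC.
  apply: (@contV (fun x => 1 + x*x*sq3 a b c)); first by move=> ?; exact: den_pos.
  apply: (@contD (fun _ => 1)); first exact: contC.
  apply: (@contM (fun x => x * x)); last exact: contC.
  by apply: contM; exact: contI.
apply: (@contB (fun t => t*t*u)).
  apply: (@contM (fun x => x * x)); last exact: contC.
  by apply: contM; exact: contI.
by apply: contM; [exact: contI | exact: contC].
Qed.

Definition Pm a b c := mx3 (a*a - sq3 a b c) (a*b) (a*c) (b*a) (b*b - sq3 a b c) (b*c)
  (c*a) (c*b) (c*c - sq3 a b c).
Definition Am (a b c : R) := mx3 0 (-c) b c 0 (-a) (-b) a 0.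

Lemma Cay_alt a b c t :
  Cay a b c t = 1%:M + cq a b c t *: (t*t *: Pm a b c - t *: Am a b c).
Proof.
rewrite mx3_one; apply/matrixP => i j; rewrite !mxE.
by case: (ord3_cases i) => ->; case: (ord3_cases j) => -> /=; ring.
Qed.

Lemma gamma_entry (M : 'M[R]_3) a b c t i j :
  (M *m Cay a b c t) i j =
  M i j + cq a b c t * (t*t*(M *m Pm a b c) i j - t*(M *m Am a b c) i j).
Proof.
rewrite Cay_alt mulmxDr mulmx1 -!scalemxAr mulmxBr -!scalemxAr !mxE.
by [].
Qed.

Lemma gamma_cont (M : 'M[R]_3) a b c : continuous (fun t => M *m Cay a b c t).
Proof.
apply: mx_cont => i j.
apply: (@cont_ext (fun t => M i j + cq a b c t * (t*t*(M *m Pm a b c) i j - t*(M *m Am a b c) i j))).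
  by move=> x; exact: gamma_entry.
exact: cont_form.
Qed.

Lemma prod_cont (g s : R -> 'M[R]_3) : continuous g -> continuous s ->
  continuous (fun t => (g t)^T *m s t).
Proof.
move=> Hg Hs; apply: mx_cont => i j.
apply: (@cont_ext (fun t => g t i0 i * s t i0 j + g t i1 i * s t i1 j + g t i2 i * s t i2 j)).
  by move=> x; rewrite mxE sum3 !mxE.
apply: (@contD (fun t => g t i0 i * s t i0 j + g t i1 i * s t i1 j)).
  apply: (@contD (fun t => g t i0 i * s t i0 j)).
    by apply: (@contM (fun t => g t i0 i)); apply: entry_cont.
  by apply: (@contM (fun t => g t i1 i)); apply: entry_cont.
by apply: (@contM (fun t => g t i2 i)); apply: entry_cont.
Qed.

End S.
Unset Implicit Arguments.

Theorem theorem9 (R : realType) (G : set 'M[R]_3) :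
  finite_subgroup_SO3 G ->
  (exists g, G g /\ g <> 1%:M) ->
  ~ exists f : set 'M[R]_3 -> 'M[R]_3,
      (forall C, quot G C -> @SO3 R (f C) /\ lcoset G (f C) = C) /\
      quot_continuous G f.
Proof.
move=> [fG GSO G1 GM GV] [h [Gh h1]] [f [Hf Hfc]].
pose s := fun M => f (lcoset G M).
have qM : forall M, (@SO3 R) M -> quot G (lcoset G M) by move=> M HM; exists M.
have sSO : forall M, (@SO3 R) M -> (@SO3 R) (s M) by move=> M HM; exact: (Hf _ (qM M HM)).1.
have sco : forall M, (@SO3 R) M -> lcoset G (s M) = lcoset G M.
  by move=> M HM; exact: (Hf _ (qM M HM)).2.
have sG : forall M, (@SO3 R) M -> G (M^T *m s M).
  move=> M HM.
  have : lcoset G M (s M) by rewrite -sco //; exists 1%:M => //; rewrite mulmx1.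
  case=> g Gg <-.
  have [HM1 _] := HM.
  by rewrite mulmxA (mulmx1C HM1) mul1mx.
have scont : forall gam : R -> 'M[R]_3, continuous gam -> (forall t, (@SO3 R) (gam t)) ->
    continuous (fun t => s (gam t)).
  move=> gam gc gS; apply/continuousP => V oV.
  have := Hfc (V `&` (@SO3 R)) (ex_intro _ V (conj oV erefl)).
  case=> _ [U [oU eU]].
  have -> : (fun t => s (gam t)) @^-1` V = gam @^-1` U.
    apply/seteqP; split => t /= H.
      have : [set M | (@SO3 R) M /\ [set C | quot G C /\ (V `&` (@SO3 R)) (f C)] (lcoset G M)] (gam t).
        by split => //; split; [exact: qM | split => //; exact: sSO].
      by rewrite eU => -[].
    have : (U `&` (@SO3 R)) (gam t) by split.
    by rewrite -eU => -[_ [_ []]].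
  exact: ((continuousP gam).1 gc).
have key : forall M a b c, (@SO3 R) M ->
    M^T *m s M = (M *m Cay a b c 1)^T *m s (M *m Cay a b c 1).
  move=> M a b c HM.
  pose gam := fun t => M *m Cay a b c t.
  have gc : continuous gam := @gamma_cont R M a b c.
  have gS : forall t, (@SO3 R) (gam t) by move=> t; exact: SO3'_mul HM (@Cay_SO3 R a b c t).
  have pc := prod_cont gc (scont gam gc gS).
  have := const_of_finite fG pc (fun t => sG _ (gS t)).
  by rewrite /gam Cay0 mulmx1.
have [a [b [c [a' [b' [c' eh]]]]]] := decomp (GSO h Gh).
have S1 : (@SO3 R) (1%:M : 'M[R]_3) by split; [rewrite trmx1 mulmx1 | rewrite det1].
have e1 := key 1%:M a b c S1.
have e2 := key (Cay a b c 1) a' b' c' (@Cay_SO3 R a b c 1).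
rewrite mul1mx in e1; rewrite -eh -e1 trmx1 mul1mx in e2.
have hu : h \in unitmx by rewrite unitmxE (GSO h Gh).2 unitr1.
have ec : lcoset G h = lcoset G 1%:M.
  apply/seteqP; split => X [g Gg <-].
    by exists (h *m g); [exact: GM | rewrite mul1mx].
  exists (invmx h *m g); first exact: GM (GV h Gh) Gg.
  by rewrite mulmxA (mulmxV hu) !mul1mx.
have esh : s h = s 1%:M by rewrite /s ec.
rewrite esh in e2.
have [SS _] := sSO _ S1.
have : 1%:M = h^T.
  by rewrite -SS {1}e2 -mulmxA SS mulmx1.
move=> /(congr1 trmx); rewrite trmx1 trmxK => eh1.
by apply: h1.
Qed.
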